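(* Let $H$ be a real Hilbert space, $A:H\to c_0$ bounded linear with adjoint $A^*:\ell^1\to H$ (identifying $c_0^*=\ell^1$), let $H_n\subset H$ be a subspace of dimension $n$ with $\mathcal N(A)\cap H_n=\{0\}$. Let $f\in H$, let $u^\dagger\in\ell^1$ satisfy $A^*u^\dagger=f$, let $\delta>0$ and $f^\delta\in H$ with $\|f^\delta-f\|\le\delta$. Then every solution $u^n$ of $$\min_{u\in\ell^1}\|u\|_1\quad\text{subject to}\quad \langle z,A^*u\rangle=\langle z,f^\delta\rangle\ \ \forall z\in H_n$$ satisfies $\|u^n\|_1\le \delta\kappa_n+\|u^\dagger\|_1$.
   Context: $\kappa_n=\sup_{z\in H_n\setminus\{0\}}\dfrac{\|z\|}{\|Az\|_\infty}=\Big(\inf_{z\in H_n,\|z\|=1}\|Az\|_\infty\Big)^{-1}$, which is finite under $\mathcal N(A)\cap H_n=\{0\}$. $A^*$ is defined by $\langle A^*u,z\rangle=\sum_iu_i(Az)_i$. *)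

(* Defs.v *)
From HB Require Import structures.
From mathcomp Require Import all_boot all_order all_algebra.
From mathcomp Require Import all_classical all_reals all_analysis.
Set Implicit Arguments. Unset Strict Implicit. Unset Printing Implicit Defensive.
Import Order.TTheory GRing.Theory Num.Theory.
Import numFieldNormedType.Exports.
Local Open Scope classical_set_scope.
Local Open Scope ring_scope.

Definition is_inner_product (R : realType) (H : normedModType R)
  (ip : H -> H -> R) : Prop :=
  (forall x y, ip x y = ip y x) /\
  (forall a x y z, ip (a *: x + y) z = a * ip x z + ip y z) /\
  (forall x, `|x| ^+ 2 = ip x x).

Definition in_l1 (R : realType) (u : nat -> R) : Prop :=
  cvgn (series (fun k => `|u k|)).
Definition norm1 (R : realType) (u : nat -> R) : R :=
  limn (series (fun k => `|u k|)).

Definition in_c0 (R : realType) (x : nat -> R) : Prop := x @ \oo --> (0 : R).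
Definition supnorm (R : realType) (x : nat -> R) : R :=
  sup [set `|x i| | i in [set: nat]].

Definition bounded_linear_to_c0 (R : realType) (H : normedModType R)
  (A : H -> nat -> R) : Prop :=
  (forall a x y i, A (a *: x + y) i = a * A x i + A y i) /\
  (forall z, in_c0 (A z)) /\
  (exists C : R, forall z i, `|A z i| <= C * `|z|).

Definition is_adjoint (R : realType) (H : normedModType R)
  (ip : H -> H -> R) (A : H -> nat -> R) (Astar : (nat -> R) -> H) : Prop :=
  forall u, in_l1 u -> forall z,
    ip (Astar u) z = limn (series (fun i => u i * A z i)).

Definition subspace_of_dim (R : realType) (H : normedModType R)
  (Hn : set H) (n : nat) : Prop :=
  exists b : 'I_n -> H,
    (forall c : 'I_n -> R, \sum_(i < n) c i *: b i = 0 -> forall i, c i = 0) /\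
    Hn = [set x | exists c : 'I_n -> R, x = \sum_(i < n) c i *: b i].

Definition kappa (R : realType) (H : normedModType R)
  (A : H -> nat -> R) (Hn : set H) : R :=
  sup [set `|z| / supnorm (A z) | z in [set z | Hn z /\ z <> 0]].

Definition feasible (R : realType) (H : normedModType R)
  (ip : H -> H -> R) (Astar : (nat -> R) -> H) (Hn : set H) (fd : H)
  (u : nat -> R) : Prop :=
  in_l1 u /\ forall z, Hn z -> ip z (Astar u) = ip z fd.
Definition is_l1_minimizer (R : realType) (H : normedModType R)
  (ip : H -> H -> R) (Astar : (nat -> R) -> H) (Hn : set H) (fd : H)
  (u : nat -> R) : Prop :=
  feasible ip Astar Hn fd u /\
  forall v, feasible ip Astar Hn fd v -> norm1 u <= norm1 v.

(* Main.v *)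
Require Import Defs.
From HB Require Import structures.
From mathcomp Require Import all_boot all_order all_algebra.
From mathcomp Require Import all_classical all_reals all_analysis.
From mathcomp Require Import ring lra zify.
From Stdlib Require Import Lia.
Import Order.TTheory GRing.Theory Num.Theory.
Import numFieldNormedType.Exports.
Local Open Scope classical_set_scope.
Local Open Scope ring_scope.
Set Implicit Arguments. Unset Strict Implicit.


Section HBsec.
Variables (R : realType) (V : lmodType R) (p : V -> R).
Hypothesis hpD : forall x y, p (x + y) <= p x + p y.
Hypothesis hpZ : forall a y, 0 < a -> a * p y <= p (a *: y).

Definition sv (L : seq (V * R)) (c : nat -> R) : V :=
  \sum_(0 <= i < size L) c i *: (nth (0,0) L i).1.
Definition st (L : seq (V * R)) (c : nat -> R) : R :=
  \sum_(0 <= i < size L) c i * (nth (0,0) L i).2.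
Definition Cond L := forall c, st L c <= p (sv L c).

Lemma svD L c d : sv L (fun i => c i + d i) = sv L c + sv L d.
Proof. by rewrite /sv -big_split; apply: eq_bigr => i _; rewrite scalerDl. Qed.
Lemma stD L c d : st L (fun i => c i + d i) = st L c + st L d.
Proof. by rewrite /st -big_split; apply: eq_bigr => i _; rewrite mulrDl. Qed.
Lemma svZ L k c : sv L (fun i => k * c i) = k *: sv L c.
Proof. by rewrite /sv scaler_sumr; apply: eq_bigr => i _; rewrite scalerA. Qed.
Lemma stZ L k c : st L (fun i => k * c i) = k * st L c.
Proof. by rewrite /st mulr_sumr; apply: eq_bigr => i _; rewrite mulrA. Qed.

Lemma sv_rcons L x c : sv (rcons L x) c = sv L c + c (size L) *: x.1.
Proof.
rewrite /sv size_rcons big_nat_recr //= nth_rcons ltnn eqxx; congr (_ + _).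
by apply: eq_big_nat => i /andP[_ hi]; rewrite nth_rcons hi.
Qed.
Lemma st_rcons L x c : st (rcons L x) c = st L c + c (size L) * x.2.
Proof.
rewrite /st size_rcons big_nat_recr //= nth_rcons ltnn eqxx; congr (_ + _).
by apply: eq_big_nat => i /andP[_ hi]; rewrite nth_rcons hi.
Qed.

Lemma hb_step L e : Cond L -> exists tau, Cond (rcons L (e, tau)).
Proof.
move=> hL.
pose S := [set st L c - p (sv L c - e) | c in [set: nat -> R]].
have key : forall c c', st L c - p (sv L c - e) <= p (sv L c' + e) - st L c'.
  move=> c c'; rewrite lerBrDr addrAC lerBlDr.
  have := hL (fun i => c i + c' i); rewrite stD svD => h.
  apply: (le_trans h).
  have := hpD (sv L c - e) (sv L c' + e).
  rewrite addrACA addNr addr0 => h'; apply: le_trans h' _.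
  by rewrite addrC.
have hS : has_sup S.
  split; first by exists (st L (fun=> 0) - p (sv L (fun=> 0) - e)); exists (fun=> 0).
  exists (p (sv L (fun=> 0) + e) - st L (fun=> 0)) => _ [c _ <-]; exact: key.
exists (sup S) => d; rewrite st_rcons sv_rcons /=.
set a := d (size L).
have [a0|an0] := eqVneq a 0.
  by rewrite a0 mul0r scale0r !addr0.
have [apos|aneg] := ltrP 0 a.
  have h : sup S <= p (sv L (fun i => a^-1 * d i) + e) - st L (fun i => a^-1 * d i).
    apply: ge_sup; first by case: hS.
    by move=> _ [c _ <-]; exact: key.
  rewrite svZ stZ in h.
  have h2 := @hpZ a (a^-1 *: sv L d + e) apos.
  rewrite scalerDr scalerA divff // scale1r in h2.
  have h3 := ler_wpM2l (ltW apos) h.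
  rewrite mulrBr mulrA divff // mul1r in h3.
  lra.
have bpos : 0 < - a by rewrite oppr_gt0 lt_neqAle an0 aneg.
have h : st L (fun i => (- a)^-1 * d i) - p (sv L (fun i => (- a)^-1 * d i) - e) <= sup S.
  by apply: sup_upper_bound => //; exists (fun i => (- a)^-1 * d i).
rewrite svZ stZ in h.
have h2 := @hpZ (- a) ((- a)^-1 *: sv L d - e) bpos.
rewrite scalerBr scalerA divff ?scale1r in h2; last by rewrite gt_eqF.
rewrite scaleNr opprK in h2.
have h3 := ler_wpM2l (ltW bpos) h.
rewrite mulrBr mulrA divff ?mul1r in h3; last by rewrite gt_eqF.
lra.
Qed.

Lemma hb_many es L : Cond L -> exists ts : seq R, size ts = size es /\ Cond (L ++ zip es ts).
Proof.
elim: es L => [|e es IH] L hL.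
  by exists [::]; rewrite cats0.
have [tau htau] := @hb_step L e hL.
have [ts [hs hts]] := IH _ htau.
by exists (tau :: ts); rewrite /= hs; split => //; rewrite -cat_rcons.
Qed.

Lemma sum_cat_split (T : Type) (M : nmodType) (x0 : T) (L E : seq T) (F : nat -> T -> M) :
  \sum_(0 <= i < size (L ++ E)) F i (nth x0 (L ++ E) i) =
  \sum_(0 <= i < size L) F i (nth x0 L i) + \sum_(0 <= i < size E) F (i + size L)%N (nth x0 E i).
Proof.
rewrite size_cat (big_cat_nat _ (leq_addr _ _)) //=; congr (_ + _).
  by apply: eq_big_nat => i /andP[_ hi]; rewrite nth_cat hi.
rewrite -{1}(add0n (size L)) big_addn addKn; apply: eq_big_nat => i _.
by rewrite nth_cat ltnNge leq_addl /= addnK.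
Qed.

Lemma Cond_cat L E (c0 c1 : nat -> R) : Cond (L ++ E) ->
  st L c0 + st E c1 <= p (sv L c0 + sv E c1).
Proof.
move=> h; have := h (fun i => if (i < size L)%N then c0 i else c1 (i - size L)%N).
have -> : st (L ++ E) (fun i => if (i < size L)%N then c0 i else c1 (i - size L)%N) = st L c0 + st E c1.
  rewrite /st (@sum_cat_split _ _ (0,0) L E (fun i x => (if (i < size L)%N then c0 i else c1 (i - size L)%N) * x.2)) //.
  congr (_ + _); apply: eq_big_nat => i /andP[_ hi].
    by rewrite hi.
  by rewrite ltnNge leq_addl /= addnK.
have -> // : sv (L ++ E) (fun i => if (i < size L)%N then c0 i else c1 (i - size L)%N) = sv L c0 + sv E c1.
rewrite /sv (@sum_cat_split _ _ (0,0) L E (fun i x => (if (i < size L)%N then c0 i else c1 (i - size L)%N) *: x.1)) //.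
congr (_ + _); apply: eq_big_nat => i /andP[_ hi].
  by rewrite hi.
by rewrite ltnNge leq_addl /= addnK.
Qed.
End HBsec.

Section MaxN.
Variable R : realType.
Definition mxN (N : nat) (x : nat -> R) : R := \big[Num.max/0]_(i < N) `|x i|.

Lemma mxN_ge0 N x : 0 <= mxN N x.
Proof. by rewrite /mxN; elim/big_ind: _ => // a b ha hb; rewrite le_max ha. Qed.

Lemma mxN_ge N x i : (i < N)%N -> `|x i| <= mxN N x.
Proof. by move=> hi; rewrite /mxN; apply: (le_bigmax _ (fun j : 'I_N => `|x j|) (Ordinal hi)). Qed.

Lemma mxN_le N x B : 0 <= B -> (forall i, (i < N)%N -> `|x i| <= B) -> mxN N x <= B.
Proof. by move=> hB h; rewrite /mxN; apply: bigmax_le => // i _; apply: h. Qed.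

Lemma mxN_mono N N' x : (N <= N')%N -> mxN N x <= mxN N' x.
Proof.
move=> h; apply: mxN_le; first exact: mxN_ge0.
by move=> i hi; apply: mxN_ge; apply: leq_trans h.
Qed.

Lemma sum_delta n k (f : nat -> R) : (k < n)%N ->
  \sum_(0 <= i < n) (i == k)%:R * f i = f k.
Proof.
move=> hk; rewrite big_mkord (bigD1 (Ordinal hk)) //= eqxx mul1r big1 ?addr0 //.
by move=> i hi; rewrite (_ : (i == k :> nat) = false) ?mul0r //; apply/negbTE; 
  apply: contra hi => /eqP h; apply/eqP; apply: val_inj.
Qed.

Definition ei (i : nat) : nat -> R := fun j => (j == i)%:R.

Lemma hb_final (N n : nat) (M : R) (v : nat -> nat -> R) (t : nat -> R) :
  0 <= M ->
  (forall c : nat -> R, \sum_(0 <= k < n) c k * t k <= M * mxN N (\sum_(0 <= k < n) c k *: v k)) ->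
  exists w : nat -> R, \sum_(0 <= i < N) `|w i| <= M /\
    forall k, (k < n)%N -> \sum_(0 <= i < N) w i * v k i = t k.
Proof.
move=> M0 hC.
pose p (x : nat -> R) := M * mxN N x.
have hpD : forall x y, p (x + y) <= p x + p y.
  move=> x y; rewrite /p -mulrDr; apply: ler_wpM2l => //.
  apply: mxN_le; first by apply: addr_ge0; apply: mxN_ge0.
  move=> i hi; apply: le_trans (ler_normD _ _) _.
  by apply: lerD; apply: mxN_ge.
have hpZ : forall a y, 0 < a -> a * p y <= p (a *: y).
  move=> a y ha; rewrite /p mulrCA; apply: ler_wpM2l => //.
  have h : mxN N y <= a^-1 * mxN N (a *: y).
    apply: mxN_le; first by apply: mulr_ge0; [rewrite invr_ge0 ltW| exact: mxN_ge0].
    move=> i hi; have := @mxN_ge N (a *: y) i hi.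
    rewrite /= normrM (gtr0_norm ha) => h1.
    rewrite -[`|y i|]mul1r -(mulVf (lt0r_neq0 ha)) -mulrA; apply: ler_wpM2l => //.
    by rewrite invr_ge0 ltW.
  have := ler_wpM2l (ltW ha) h; rewrite mulrA divff ?mul1r //; exact: lt0r_neq0.
pose L0 := mkseq (fun k => (v k, t k)) n.
have hL0 : Cond p L0.
  move=> c; rewrite /st /sv size_mkseq.
  have := hC c; congr (_ <= p _).
    by apply: eq_big_nat => k /andP[_ hk]; rewrite nth_mkseq.
  by apply: eq_big_nat => k /andP[_ hk]; rewrite nth_mkseq.
pose es := mkseq ei N.
have [ts [hs hts]] := hb_many hpD hpZ es hL0.
pose E := zip es ts.
have sE : size E = N by rewrite size_zip hs size_mkseq minnn.
have nE : forall i, (i < N)%N -> nth (0,0) E i = (ei i, nth 0 ts i).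
  move=> i hi; rewrite nth_zip ?hs ?size_mkseq // nth_mkseq //.
pose w i := nth 0 ts i.
have stL0 : forall c, st L0 c = \sum_(0 <= k < n) c k * t k.
  by move=> c; rewrite /st size_mkseq; apply: eq_big_nat => k /andP[_ hk]; rewrite nth_mkseq.
have svL0 : forall c, sv L0 c = \sum_(0 <= k < n) c k *: v k.
  by move=> c; rewrite /sv size_mkseq; apply: eq_big_nat => k /andP[_ hk]; rewrite nth_mkseq.
have stE : forall c, st E c = \sum_(0 <= i < N) c i * w i.
  by move=> c; rewrite /st sE; apply: eq_big_nat => k /andP[_ hk]; rewrite nE.
have svE : forall c j, sv E c j = \sum_(0 <= i < N) c i * (j == i)%:R.
  move=> c j; rewrite /sv sE fct_sumE; apply: eq_big_nat => k /andP[_ hk]; by rewrite nE.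
exists w; split.
  have := Cond_cat (fun=> 0) (fun i => Num.sg (w i)) hts.
  rewrite stL0 svL0 stE big1 ?add0r; last by move=> *; rewrite mul0r.
  rewrite [X in p (X + _)]big1 ?add0r; last by move=> *; rewrite scale0r.
  rewrite (eq_big_nat _ _ (fun i _ => esym (normrEsg (w i)))) => h; apply: le_trans h _.
  rewrite /p -[leRHS]mulr1; apply: ler_wpM2l => //; apply: mxN_le => // j hj.
  rewrite svE.
  have -> : \sum_(0 <= i < N) Num.sg (w i) * (j == i)%:R = Num.sg (w j).
    rewrite -(sum_delta (fun i => Num.sg (w i)) hj); apply: eq_big_nat => i _.
    by rewrite mulrC eq_sym.
  by rewrite normr_sg; case: (w j != 0).
move=> k hk.
have hsum : forall (c : nat -> R) j, (\sum_(0 <= k' < n) c k' *: v k') j = \sum_(0 <= k' < n) c k' * v k' j.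
  by move=> c j; rewrite fct_sumE.
have hdel : forall (s : R) (f : nat -> R), \sum_(0 <= k' < n) (s * (k' == k)%:R) * f k' = s * f k.
  move=> s f; rewrite -(sum_delta (fun i => s * f i) hk).
  by apply: eq_big_nat => i _; rewrite [s * _]mulrC -mulrA.
have hdel2 : forall (s : R) j, (j < N)%N -> \sum_(0 <= i < N) (s * v k i) * (j == i)%:R = s * v k j.
  move=> s j hj; rewrite -(sum_delta (fun i => s * v k i) hj).
  by apply: eq_big_nat => i _; rewrite mulrC eq_sym.
have hst : forall s : R, \sum_(0 <= i < N) (s * v k i) * w i = s * \sum_(0 <= i < N) w i * v k i.
  by move=> s; rewrite mulr_sumr; apply: eq_big_nat => i _; rewrite -mulrA [v k i * w i]mulrC.
have key : forall s : R, s * t k - s * \sum_(0 <= i < N) w i * v k i <= 0.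
  move=> s.
  have := Cond_cat (fun i => s * (i == k)%:R) (fun i => - s * v k i) hts.
  rewrite stL0 svL0 stE hdel hst mulNr => h; apply: le_trans h _.
  rewrite /p; apply: mulr_ge0_le0 => //; apply: mxN_le => // j hj.
  have hadd : forall (f g : nat -> R) j, (f + g) j = f j + g j by [].
  by rewrite hadd hsum hdel svE hdel2 // mulNr addrN normr0.
apply/eqP; rewrite eq_le; apply/andP; split.
  by have := key (-1); rewrite !mulN1r; lra.
by have := key 1; rewrite !mul1r; lra.
Qed.
End MaxN.


Section Ser.
Variable R : realType.

Lemma ser_fin (a : nat -> R) N : (forall i, (N <= i)%N -> a i = 0) ->
  cvgn (series a) /\ limn (series a) = \sum_(0 <= i < N) a i.
Proof.
move=> h.
have hc : series a @ \oo --> \sum_(0 <= i < N) a i.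
  apply: cvg_near_cst; exists N => // n /= hn.
  rewrite /series /= (big_cat_nat _ hn) //= [X in _ + X]big_nat_cond [X in _ + X]big1 ?addr0 //.
  by move=> i /andP[/andP[hi _] _]; exact: h.
split; first by apply/cvg_ex; exists (\sum_(0 <= i < N) a i).
exact: cvg_lim.
Qed.

Lemma ser_nondec (a : nat -> R) : (forall i, 0 <= a i) ->
  {homo series a : n m / (n <= m)%N >-> n <= m}.
Proof.
move=> h n m hnm; rewrite /series /= (big_cat_nat _ hnm) //= lerDl.
by apply: sumr_ge0 => i _.
Qed.

Lemma ser_mono (a : nat -> R) B : (forall i, 0 <= a i) -> (forall n, series a n <= B) ->
  cvgn (series a) /\ limn (series a) <= B.
Proof.
move=> h0 hB.
have hub : has_ubound (range (series a)) by exists B => _ [n _ <-].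
have hc := nondecreasing_cvgn (ser_nondec h0) hub.
have cv : cvgn (series a) by apply/cvg_ex; eexists; exact: hc.
split => //; apply: limr_le => //; exact: nearW.
Qed.

Lemma ser_le_lim (a : nat -> R) : (forall i, 0 <= a i) -> cvgn (series a) ->
  forall n, series a n <= limn (series a).
Proof. by move=> h0 cv n; apply: nondecreasing_cvgn_le => //; exact: ser_nondec. Qed.
End Ser.
Section Rank.
Variables (R : realType) (n : nat) (P : nat -> 'I_n -> R).
Hypothesis hP : forall c : 'I_n -> R, (forall i, \sum_(j < n) c j * P i j = 0) -> forall j, c j = 0.

Definition QQ N : 'M[R]_(n, N) := \matrix_(j < n, i < N) P i j.

Lemma kerS N M : (N <= M)%N -> (kermx (QQ M) <= kermx (QQ N))%MS.
Proof.
move=> h; apply/sub_kermxP; apply/matrixP => x i.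
have := congr1 (fun K : 'M[R]_(n, M) => K x (widen_ord h i)) (mulmx_ker (QQ M)).
rewrite [X in X = _]mxE [X in _ = X]mxE => e.
rewrite [X in _ = X]mxE -[X in _ = X]e; rewrite mxE; apply: eq_bigr => j _; by rewrite !mxE.
Qed.

Lemma rk_mono N M : (N <= M)%N -> (\rank (QQ N) <= \rank (QQ M))%N.
Proof.
move=> h; have := mxrankS (kerS h); rewrite !mxrank_ker.
have := rank_leq_row (QQ N); have := rank_leq_row (QQ M); lia.
Qed.

Lemma rk_max : exists Ns, forall N, (\rank (QQ N) <= \rank (QQ Ns))%N.
Proof.
apply: contrapT => hn.
have hall : forall Ns, exists N, (\rank (QQ Ns) < \rank (QQ N))%N.
  move=> Ns; apply: contrapT => hc; apply: hn; exists Ns => N.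
  by apply: contrapT => hlt; apply: hc; exists N; rewrite ltnNge; apply/negP.
have hk : forall k, exists N, (k <= \rank (QQ N))%N.
  elim=> [|k [N hN]]; first by exists 0%N.
  by have [N' hN'] := hall N; exists N'; apply: leq_ltn_trans hN'.
have [N hN] := hk n.+1; have := rank_leq_row (QQ N); lia.
Qed.

Lemma rk_free : exists Ns, row_free (QQ Ns).
Proof.
have [Ns hNs] := rk_max; exists Ns.
apply: contrapT => /negP hnf.
set K := kermx (QQ Ns).
have hK : K != 0.
  rewrite -mxrank_eq0 mxrank_ker; move: hnf; rewrite /row_free.
  have := rank_leq_row (QQ Ns); lia.
have [i0 [j0 hij]] : exists i0 j0, K i0 j0 != 0.
  apply: contrapT => hc; move/negP: hK; apply; apply/eqP/matrixP => i j.
  rewrite [RHS]mxE; apply/eqP; apply: contrapT => hne; apply: hc; exists i, j; exact/negP.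
pose c := row i0 K.
have hc : forall M, (Ns <= M)%N -> c *m QQ M = 0.
  move=> M hM; apply/sub_kermxP.
  have e1 := kerS hM.
  have hr : \rank (QQ M) = \rank (QQ Ns).
    by apply/eqP; rewrite eqn_leq hNs rk_mono.
  have := (mxrank_leqif_eq e1).2; rewrite !mxrank_ker hr eqxx => /esym /andP[_ e2].
  exact: submx_trans (row_sub i0 K) e2.
have hlt : forall i, (i < Ns + i.+1)%N by move=> i; lia.
have hzero : forall j, c 0 j = 0.
  apply: hP => i.
  have := congr1 (fun K : 'M[R]_(1, Ns + i.+1) => K 0 (Ordinal (hlt i))) (hc _ (leq_addr _ _)).
  rewrite [X in X = _]mxE [X in _ = X]mxE => e.
  rewrite -[RHS]e; apply: eq_bigr => j _; by rewrite !mxE.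
have e0 : c 0 j0 = K i0 j0 by rewrite /c mxE.
by move: hij; rewrite -e0 hzero eqxx.
Qed.

Lemma rk_bound : exists N0 C, 0 <= C /\ forall (c : 'I_n -> R) j,
  `|c j| <= C * mxN N0 (fun i => \sum_(j < n) c j * P i j).
Proof.
have [Ns /row_freeP [B hB]] := rk_free.
exists Ns, (\sum_(i < Ns) \sum_(j < n) `|B i j|); split.
  by apply: sumr_ge0 => i _; apply: sumr_ge0 => j _.
move=> c j.
set m := mxN _ _.
pose u := \row_(j < n) c j.
have hu : u = (u *m QQ Ns) *m B by rewrite -mulmxA hB mulmx1.
have -> : c j = \sum_(i < Ns) (\sum_(j' < n) c j' * P i j') * B i j.
  have := congr1 (fun K : 'M[R]_(1, n) => K 0 j) hu; rewrite [X in X = _]mxE [X in _ = X]mxE => ->.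
  by apply: eq_bigr => i _; rewrite !mxE; congr (_ * _); apply: eq_bigr => j' _; rewrite !mxE.
apply: le_trans (ler_norm_sum _ _ _) _.
rewrite mulr_suml; apply: ler_sum => i _.
rewrite normrM mulrC; apply: le_trans (_ : `|B i j| * m <= _).
  by apply: ler_wpM2l => //; exact: (@mxN_ge _ Ns (fun i => \sum_(j < n) c j * P i j) i (ltn_ord i)).
apply: ler_wpM2r; first exact: mxN_ge0.
by rewrite (bigD1 j) //= lerDl; apply: sumr_ge0.
Qed.

Hypothesis hc0 : forall j, (fun i => P i j) @ \oo --> (0 : R).

Lemma tail_bound : exists N C, 0 <= C /\
  (forall (c : 'I_n -> R) j, `|c j| <= C * mxN N (fun i => \sum_(j < n) c j * P i j)) /\
  (forall (c : 'I_n -> R) i, `|\sum_(j < n) c j * P i j| <= mxN N (fun i => \sum_(j < n) c j * P i j)).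
Proof.
have [N0 [C [C0 hC]]] := rk_bound.
pose K := C * n%:R + 1.
have K0 : 0 < K by rewrite /K ltr_wpDl // mulr_ge0.
have hev : \forall i \near \oo, forall j, `|P i j| <= K^-1.
  have Ki : 0 < K^-1 by rewrite invr_gt0.
  apply: filter_forall => j; exact: (@cvgr0_norm_le _ _ _ _ _ (fun i => P i j) (hc0 j) _ Ki).
have [N1 _ hN1] := hev.
exists (N0 + N1)%N, C; split => //; split.
  move=> c j; apply: le_trans (hC c j) _; apply: ler_wpM2l => //; apply: mxN_mono; exact: leq_addr.
move=> c i.
set m := mxN (N0 + N1) _.
have [hi|hi] := ltnP i (N0 + N1).
  exact: (@mxN_ge _ _ (fun i => \sum_(j < n) c j * P i j) i hi).
have hi1 : (N1 <= i)%N by apply: leq_trans hi; exact: leq_addl.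
pose m0 := mxN N0 (fun i => \sum_(j < n) c j * P i j).
have hm : m0 <= m by apply: mxN_mono; exact: leq_addr.
apply: le_trans (ler_norm_sum _ _ _) _.
apply: le_trans (_ : \sum_(j < n) (C * m0) * K^-1 <= _).
  apply: ler_sum => j _; rewrite normrM; apply: ler_pM => //; exact: hN1.
rewrite sumr_const card_ord -mulr_natr -mulrA mulrC -mulrA.
have -> : K^-1 * (n%:R * (C * m0)) = m0 * ((C * n%:R) / K) by ring.
apply: le_trans hm; rewrite -[leRHS]mulr1; apply: ler_wpM2l; first exact: mxN_ge0.
rewrite ler_pdivrMr // mul1r /K; lra.
Qed.
End Rank.

Unset Implicit Arguments. Set Strict Implicit.

Theorem lemma1 (R : realType) (H : completeNormedModType R)
  (ip : H -> H -> R) (A : H -> nat -> R) (Astar : (nat -> R) -> H)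
  (Hn : set H) (n : nat) (f : H) (udag : nat -> R) (delta : R) (fd : H)
  (un : nat -> R) :
  is_inner_product ip ->
  bounded_linear_to_c0 A ->
  is_adjoint ip A Astar ->
  subspace_of_dim Hn n ->
  (forall z, Hn z -> A z = (fun _ => 0) -> z = 0) ->
  in_l1 udag -> Astar udag = f ->
  0 < delta -> `|fd - f| <= delta ->
  is_l1_minimizer ip Astar Hn fd un ->
  norm1 un <= delta * kappa A Hn + norm1 udag.
Proof.
move=> [ipC [ipL ipN]] [AL [Ac0 _]] hadj [b [bind hHn]] hinj l1d hAf dpos hfd [[_ _] minun].
have ipD : forall x y z, ip (x + y) z = ip x z + ip y z.
  by move=> x y z; rewrite -[x]scale1r ipL mul1r scale1r.
have ip0 : forall z, ip 0 z = 0.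
  by move=> z; have := ipD 0 0 z; rewrite addr0; lra.
have ipZ : forall a x z, ip (a *: x) z = a * ip x z.
  by move=> a x z; rewrite -[a *: x]addr0 ipL ip0 addr0.
have ipD2 : forall x y z, ip z (x + y) = ip z x + ip z y.
  by move=> x y z; rewrite ipC ipD ![ip _ z]ipC.
have ipZ2 : forall a x z, ip z (a *: x) = a * ip z x.
  by move=> a x z; rewrite ipC ipZ ipC.
have AD : forall x y i, A (x + y) i = A x i + A y i.
  by move=> x y i; rewrite -[x]scale1r AL mul1r scale1r.
have A0 : forall i, A 0 i = 0.
  by move=> i; have := AD 0 0 i; rewrite addr0; lra.
have AZ : forall a x i, A (a *: x) i = a * A x i.
  by move=> a x i; rewrite -[a *: x]addr0 AL A0 addr0.
have ip_sum : forall (c : 'I_n -> R) e, ip (\sum_(j < n) c j *: b j) e = \sum_(j < n) c j * ip (b j) e.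
  move=> c e; rewrite (big_morph (fun x => ip x e) (fun x y => ipD x y e) (ip0 e)).
  by apply: eq_bigr => j _; rewrite ipZ.
have A_sum : forall (c : 'I_n -> R) i, A (\sum_(j < n) c j *: b j) i = \sum_(j < n) c j * A (b j) i.
  move=> c i; rewrite (big_morph (fun x => A x i) (fun x y => AD x y i) (A0 i)).
  by apply: eq_bigr => j _; rewrite AZ.
have CS : forall z e, ip z e <= `|z| * `|e|.
  move=> z e.
  have hx := ipN (`|e| *: z + (- `|z|) *: e).
  rewrite ipL ipZ !ipD2 !ipZ2 -!ipN [ip e z]ipC in hx.
  have h0 := exprn_ge0 2 (normr_ge0 (`|e| *: z + - `|z| *: e)).
  rewrite hx in h0.
  have [z0|zn0] := eqVneq z 0.
    by rewrite z0 ip0 normr0 mul0r.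
  have [e0|en0] := eqVneq e 0.
    by rewrite e0 normr0 mulr0 -(scale0r (0 : H)) ipZ2 mul0r.
  have hz : 0 < `|z| by rewrite normr_gt0.
  have he : 0 < `|e| by rewrite normr_gt0.
  have hs : 0 < `|z| * `|e| by apply: mulr_gt0.
  have h1 : 0 <= (`|z| * `|e|) * (`|z| * `|e| - ip z e) by nra.
  rewrite pmulr_rge0 // subr_ge0 in h1; exact: h1.
pose P i (j : 'I_n) := A (b j) i.
have eA : forall c : 'I_n -> R, A (\sum_(j < n) c j *: b j) = (fun i => \sum_(j < n) c j * P i j).
  by move=> c; apply/funext => i; rewrite A_sum.
have hP : forall c : 'I_n -> R, (forall i, \sum_(j < n) c j * P i j = 0) -> forall j, c j = 0.
  move=> c hc; apply: bind; apply: hinj; first by rewrite hHn; exists c.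
  by rewrite eA; apply/funext => i; rewrite hc.
have hc0 : forall j, (fun i => P i j) @ \oo --> (0 : R) by move=> j; exact: (Ac0 (b j)).
have [N [C [C0 [hCc hCt]]]] := tail_bound hP hc0.
have hb : forall (c : 'I_n -> R) i, `|A (\sum_(j < n) c j *: b j) i| <= mxN N (A (\sum_(j < n) c j *: b j)).
  by move=> c i; rewrite eA; exact: hCt.
have hc : forall (c : 'I_n -> R) j, `|c j| <= C * mxN N (A (\sum_(j < n) c j *: b j)).
  by move=> c j; rewrite eA; exact: hCc.
have hsup : forall c : 'I_n -> R, supnorm (A (\sum_(j < n) c j *: b j)) = mxN N (A (\sum_(j < n) c j *: b j)).
  move=> c; set z := \sum_(j < n) c j *: b j.
  have hS : has_sup [set `|A z i| | i in [set: nat]].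
    split; first by exists `|A z 0%N|; exists 0%N.
    by exists (mxN N (A z)) => _ [i _ <-]; exact: hb.
  rewrite /supnorm; apply/eqP; rewrite eq_le; apply/andP; split.
    apply: ge_sup; first by exists `|A z 0%N|; exists 0%N.
    by move=> _ [i _ <-]; exact: hb.
  apply: mxN_le.
    by apply: le_trans (normr_ge0 (A z 0%N)) _; apply: sup_upper_bound => //; exists 0%N.
  by move=> i _; apply: sup_upper_bound => //; exists i.
pose Bb := \sum_(j < n) `|b j|.
have hzb : forall c : 'I_n -> R, `|\sum_(j < n) c j *: b j| <= C * mxN N (A (\sum_(j < n) c j *: b j)) * Bb.
  move=> c; apply: le_trans (ler_norm_sum _ _ _) _; rewrite /Bb mulr_sumr.
  apply: ler_sum => j _; rewrite normrZ; apply: ler_wpM2r => //; exact: hc.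
have hmpos : forall c : 'I_n -> R, \sum_(j < n) c j *: b j <> 0 -> 0 < mxN N (A (\sum_(j < n) c j *: b j)).
  move=> c hz; rewrite lt_neqAle mxN_ge0 andbT; apply/negP => /eqP h0; apply: hz.
  rewrite big1 // => j _.
  have := hc c j; rewrite -h0 mulr0 normr_le0 => /eqP ->; exact: scale0r.
pose KS := [set `|z| / supnorm (A z) | z in [set z | Hn z /\ z <> 0]].
have kapE : kappa A Hn = sup KS by [].
have hKS : forall x, KS x -> 0 <= x /\ x <= C * Bb.
  move=> _ [z [hz zn0] <-]; move: hz zn0; rewrite hHn => -[c ->] zn0.
  rewrite hsup; have mp := hmpos c zn0; split; first by apply: divr_ge0 => //; exact: ltW.
  by rewrite ler_pdivrMr // mulrAC; exact: hzb.
have kap0 : 0 <= kappa A Hn.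
  rewrite kapE; case: (pselect (KS !=set0)) => [[x hx]|hne].
    apply: le_trans (hKS x hx).1 _; apply: sup_upper_bound => //; split; first by exists x.
    by exists (C * Bb) => y hy; exact: (hKS y hy).2.
  have -> : KS = set0.
    by apply/seteqP; split => x hx //; exfalso; apply: hne; exists x.
  by rewrite sup0.
have hkap : forall c : 'I_n -> R, `|\sum_(j < n) c j *: b j| <= kappa A Hn * mxN N (A (\sum_(j < n) c j *: b j)).
  move=> c; set z := \sum_(j < n) c j *: b j.
  have [z0|zn0] := eqVneq z 0.
    by rewrite z0 normr0; apply: mulr_ge0 => //; exact: mxN_ge0.
  have zn0' : z <> 0 by apply/eqP.
  have mp := hmpos c zn0'.
  have hx : KS (`|z| / supnorm (A z)).
    by exists z => //; split => //; rewrite hHn; exists c.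
  have hKSs : has_sup KS.
    split; first by exists (`|z| / supnorm (A z)).
    by exists (C * Bb) => y hy; exact: (hKS y hy).2.
  have := sup_upper_bound hKSs hx; rewrite -kapE hsup.
  by rewrite ler_pdivrMr.
pose e := fd - f.
pose bn (k : nat) : H := oapp b 0 (insub k).
have bnE : forall j : 'I_n, bn j = b j by move=> j; rewrite /bn valK.
have M0 : 0 <= delta * kappa A Hn by apply: mulr_ge0 => //; exact: ltW.
have hcond : forall c : nat -> R, \sum_(0 <= k < n) c k * ip (bn k) e <=
    delta * kappa A Hn * mxN N (\sum_(0 <= k < n) c k *: A (bn k)).
  move=> c.
  set z := \sum_(j < n) c j *: b j.
  have E1 : \sum_(0 <= k < n) c k * ip (bn k) e = ip z e.
    by rewrite big_mkord /z ip_sum; apply: eq_bigr => j _; rewrite bnE.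
  have E2 : \sum_(0 <= k < n) c k *: A (bn k) = A z.
    apply/funext => i; rewrite fct_sumE big_mkord /z A_sum; apply: eq_bigr => j _.
    by rewrite bnE.
  rewrite E1 E2; apply: le_trans (CS z e) _.
  have he : `|e| <= delta by [].
  have hz := hkap (fun j : 'I_n => c j); rewrite -/z in hz.
  have hm := mxN_ge0 N (A z).
  have hzn := normr_ge0 z.
  have hen := normr_ge0 e.
  apply: le_trans (_ : `|z| * delta <= _); first by apply: ler_wpM2l.
  rewrite mulrC -mulrA; apply: ler_wpM2l; first exact: ltW.
  by apply: le_trans hz _; rewrite mulrC.
have [w [hw1 hw2]] := @hb_final R N n (delta * kappa A Hn) (fun k => A (bn k)) (fun k => ip (bn k) e) M0 hcond.
pose W i := if (i < N)%N then w i else 0.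
have W0 : forall i, (N <= i)%N -> W i = 0 by move=> i hi; rewrite /W ltnNge hi.
have WE : forall g : nat -> R -> R, \sum_(0 <= i < N) g i (W i) = \sum_(0 <= i < N) g i (w i).
  by move=> g; apply: eq_big_nat => i /andP[_ hi]; rewrite /W hi.
have [cvW limW] : cvgn (series (fun i => `|W i|)) /\ limn (series (fun i => `|W i|)) = \sum_(0 <= i < N) `|W i|.
  by apply: ser_fin => i hi; rewrite W0 // normr0.
rewrite (WE (fun _ x => `|x|)) in limW.
pose v i := udag i + W i.
have h0 : forall (u : nat -> R) i, 0 <= `|u i| by move=> u i; exact: normr_ge0.
have [l1v nv] : in_l1 v /\ norm1 v <= norm1 udag + \sum_(0 <= i < N) `|w i|.
  apply: ser_mono => [i|k]; first exact: normr_ge0.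
  apply: le_trans (_ : series (fun i => `|udag i|) k + series (fun i => `|W i|) k <= _).
    rewrite /series /= -big_split /=; apply: ler_sum => i _; exact: ler_normD.
  apply: lerD; first exact: ser_le_lim.
  by rewrite -limW; apply: ser_le_lim.
have feas : forall z, Hn z -> ip z (Astar v) = ip z fd.
  move=> z0 hz; move: hz; rewrite hHn => -[c ->]; set z := \sum_(j < n) c j *: b j.
  rewrite ipC hadj //.
  have -> : (fun i => v i * A z i) = (fun i => udag i * A z i) + (fun i => W i * A z i).
    by apply/funext => i; rewrite /v mulrDl.
  have [cv2 lim2] : cvgn (series (fun i => W i * A z i)) /\ limn (series (fun i => W i * A z i)) = \sum_(0 <= i < N) W i * A z i.
    by apply: ser_fin => i hi; rewrite W0 // mul0r.
  have cv1 : cvgn (series (fun i => udag i * A z i)).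
    apply: normed_cvg.
    suff : cvgn (series (fun i => `|udag i * A z i|)) /\ limn (series (fun i => `|udag i * A z i|)) <= mxN N (A z) * norm1 udag.
      by case.
    apply: ser_mono => [i|k]; first exact: normr_ge0. rewrite /series /=; apply: le_trans (_ : \sum_(0 <= i < k) mxN N (A z) * `|udag i| <= _).
      apply: ler_sum => i _; rewrite normrM mulrC; apply: ler_wpM2r => //; exact: hb.
    rewrite -mulr_sumr; apply: ler_wpM2l; first exact: mxN_ge0.
    exact: (ser_le_lim (fun i => normr_ge0 _) l1d k).
  rewrite lim_seriesD // lim2 -hadj // hAf.
  have -> : \sum_(0 <= i < N) W i * A z i = ip z e.
    rewrite (WE (fun i x => x * A z i)) /z ip_sum.
    rewrite (eq_bigr (fun i => \sum_(j < n) w i * (c j * A (b j) i))); last first.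
      by move=> i _; rewrite A_sum mulr_sumr.
    rewrite exchange_big /=; apply: eq_bigr => j _.
    have := hw2 j (ltn_ord j); rewrite /= bnE => <-.
    by rewrite mulr_sumr; apply: eq_bigr => i _; rewrite mulrCA.
  by rewrite ipC -ipD2 /e addrC subrK.
have := minun v (conj l1v feas).
lra.

Qed.
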